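(* Let $\lambda\in\Lambda$ and let $D$ be a ball contained in $K(Q_\lambda,B)$. Then (1) all points of $D$ have the same itinerary for $Q_\lambda$; (2) if this common itinerary is not pre-periodic under the one-sided shift, then $D$ is a wandering disc for $Q_\lambda$ which is not attracted to an attracting periodic orbit.
   Context: Let $p$ be a prime, $\mathbb C_p$ with $p$-adic absolute value, $|p|=1/p$. $\Lambda=\{\lambda\in\mathbb C_p:|\lambda-1|<1\}$, $P_\lambda(z)=\frac{\lambda}{p}z^p+\left(1-\frac{\lambda}{p}\right)z^{p+1}$, $\rho=p^{-1/(p-1)}$. Fix $\hat r\in|\mathbb C_p^*|$, $\hat r>1$, $B=\{z:|z|\le\hat r\}$; $\mathcal H(B)$ is the ring of power series $\sum a_iz^i$ convergent on $B$ with norm $\|f\|_B=\sup_i|a_i|\hat r^{\,i}$. Fix $Q\in\mathcal H(B)$ with $\|Q\|_B<\rho$, $Q^*_\lambda=P_\lambda+Q$, and let $h(\lambda)$ be the unique fixed point of $Q^*_\lambda$ in $\{z:|z-1|\le|Q(1)|/p\}$. Define $Q_\lambda(z)=P_\lambda(z+h(\lambda)-1)+Q(z+h(\lambda)-1)+1-h(\lambda)$ for $z\in B$, and $K(Q_\lambda,B)=\{z\in B:Q_\lambda^n(z)\in B\ \forall n\ge0\}$. Let $B_0=\{z:|z|<1\}$, $B_1=\{z:|z-1|<1\}$; one has $K(Q_\lambda,B)\subset B_0\sqcup B_1$. The itinerary of $z\in K(Q_\lambda,B)$ is the sequence $\theta_0\theta_1\theta_2\ldots\in\{0,1\}^{\mathbb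 N\cup\{0\}}$ with $Q_\lambda^n(z)\in B_{\theta_n}$ for all $n\ge0$. $D$ is a wandering disc if $Q_\lambda^n(D)\cap Q_\lambda^m(D)\neq\emptyset$ only when $n=m$; it is not attracted to an attracting periodic orbit if no point of $D$ lies in an open ball contained in the basin of attraction of an attracting periodic point $z_0$ (of period $k$, with $|(Q_\lambda^k)'(z_0)|<1$). *)

(* Defs.v *)
From HB Require Import structures.
From mathcomp Require Import all_boot all_order all_algebra.
From mathcomp Require Import all_classical all_reals all_analysis.
Set Implicit Arguments. Unset Strict Implicit. Unset Printing Implicit Defensive.
Import Order.TTheory GRing.Theory Num.Theory.
Local Open Scope ring_scope.
Local Open Scope classical_set_scope.

Definition rho (R : realType) (p : nat) : R := (p%:R) `^ (- (p%:R - 1)^-1).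

Section Cp.
Variables (R : realType) (K : fieldType) (absv : K -> R).

Definition cvgK (u : nat -> K) (l : K) : Prop :=
  forall e : R, 0 < e -> exists N : nat, forall n, (N <= n)%N -> absv (u n - l) < e.

Definition cauchyK (u : nat -> K) : Prop :=
  forall e : R, 0 < e -> exists N : nat, forall m n, (N <= m)%N -> (N <= n)%N ->
    absv (u m - u n) < e.

(* (K, absv) is (isomorphic to) C_p: a complete non-archimedean absolutely valued
   field (K is required algebraically closed in the theorem) with |p| = 1/p, in which
   the algebraic numbers (roots of nonzero rational polynomials) are dense. *)
Definition is_Cp (p : nat) : Prop :=
  [/\ prime p,
      absv 0 = 0,
      (forall x, x != 0 -> 0 < absv x),
      (forall x y, absv (x * y) = absv x * absv y) &
      (forall x y, absv (x + y) <= Num.max (absv x) (absv y))] /\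
  [/\ absv (p%:R) = (p%:R)^-1,
      (forall u, cauchyK u -> exists l, cvgK u l) &
      (forall x (e : R), 0 < e -> exists y : K,
          (exists q : {poly rat}, q != 0 /\ root (map_poly (@ratr K) q) y) /\
          absv (x - y) < e)].

Definition Pl (p : nat) (l z : K) : K :=
  l / p%:R * z ^+ p + (1 - l / p%:R) * z ^+ p.+1.

Definition ps_sum (a : nat -> K) (z : K) (n : nat) : K := \sum_(i < n) a i * z ^+ i.

Definition is_series_fun (rhat : R) (a : nat -> K) (Qf : K -> K) : Prop :=
  forall z, absv z <= rhat -> cvgK (ps_sum a z) (Qf z).

Definition Qlam (p : nat) (Qf : K -> K) (l h : K) (z : K) : K :=
  Pl p l (z + h - 1) + Qf (z + h - 1) + 1 - h.

Definition filledK (f : K -> K) (rhat : R) (z : K) : Prop :=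
  forall n : nat, absv (iter n f z) <= rhat.

(* th is the itinerary of z (false = 0 : B_0, true = 1 : B_1) *)
Definition itinerary_of (f : K -> K) (z : K) (th : nat -> bool) : Prop :=
  forall n : nat, if th n then absv (iter n f z - 1) < 1 else absv (iter n f z) < 1.

Definition preperiodic (th : nat -> bool) : Prop :=
  exists m k : nat, (0 < k)%N /\ forall n, (m <= n)%N -> th (n + k)%N = th n.

Definition cp_ball (D : set K) : Prop :=
  exists (c : K) (r : R), 0 < r /\
    (D = [set z | absv (z - c) < r] \/ D = [set z | absv (z - c) <= r]).

Definition wandering (f : K -> K) (D : set K) : Prop :=
  forall n m : nat, (exists w, (iter n f @` D) w /\ (iter m f @` D) w) -> n = m.

Definition has_derivK (f : K -> K) (z0 L : K) : Prop :=
  forall e : R, 0 < e -> exists d : R, 0 < d /\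
    forall z, 0 < absv (z - z0) < d -> absv ((f z - f z0) / (z - z0) - L) < e.

Definition attracting_periodic (f : K -> K) (rhat : R) (z0 : K) (k : nat) : Prop :=
  [/\ (0 < k)%N, filledK f rhat z0, iter k f z0 = z0 &
      exists L, has_derivK (iter k f) z0 L /\ absv L < 1].

Definition basin (f : K -> K) (rhat : R) (z0 : K) (k : nat) (w : K) : Prop :=
  filledK f rhat w /\ cvgK (fun n => iter (n * k) f w) z0.

Definition not_attracted (f : K -> K) (rhat : R) (D : set K) : Prop :=
  ~ exists (z0 : K) (k : nat), attracting_periodic f rhat z0 k /\
      exists (z c : K) (r : R), [/\ D z, 0 < r, absv (z - c) < r &
        forall w, absv (w - c) < r -> basin f rhat z0 k w].

End Cp.

(* Main.v *)
Require Import Defs.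
From HB Require Import structures.
From mathcomp Require Import all_boot all_order all_algebra.
From mathcomp Require Import all_classical all_reals all_analysis.
From mathcomp Require Import ring lra zify.
From Stdlib Require Import Lia.
Import Order.TTheory GRing.Theory Num.Theory.
Local Open Scope ring_scope.
Local Open Scope classical_set_scope.
Section Val.
Variables (R : realType) (K : closedFieldType) (absv : K -> R).
Hypothesis a0 : absv 0 = 0.
Hypothesis apos : forall x, x != 0 -> 0 < absv x.
Hypothesis amul : forall x y, absv (x * y) = absv x * absv y.
Hypothesis aultra : forall x y, absv (x + y) <= Num.max (absv x) (absv y).

Lemma ag0 x : 0 <= absv x.
Proof. by have [->|/apos/ltW//] := eqVneq x 0; rewrite a0. Qed.

Lemma a1 : absv 1 = 1.
Proof.
have h : absv 1 = absv 1 * absv 1 by rewrite -amul mulr1.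
have p1 : 0 < absv 1 by apply: apos; exact: oner_neq0.
by apply: (mulfI (lt0r_neq0 p1)); rewrite mulr1 -h.
Qed.

Lemma aN1 : absv (-1) = 1.
Proof.
have h : absv (-1) * absv (-1) = 1 by rewrite -amul mulrNN mulr1 a1.
have p1 := ag0 (-1).
have : (absv (-1) - 1) * (absv (-1) + 1) = 0 by rewrite mulrDr !mulrBl h; ring.
move/eqP; rewrite mulf_eq0 => /orP[|]; first by rewrite subr_eq0 => /eqP.
move=> /eqP H; have : 0 < absv (-1) + 1 by rewrite ltr_wpDl.
by rewrite H ltxx.
Qed.

Lemma aN x : absv (- x) = absv x.
Proof. by rewrite -mulN1r amul aN1 mul1r. Qed.

Lemma aB x y : absv (x - y) = absv (y - x).
Proof. by rewrite -aN opprB. Qed.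

Lemma aX x n : absv (x ^+ n) = absv x ^+ n.
Proof. by elim: n => [|n IH]; rewrite ?expr0 ?a1 // !exprS amul IH. Qed.

Lemma aD_le x y B : absv x <= B -> absv y <= B -> absv (x + y) <= B.
Proof. by move=> hx hy; apply: le_trans (aultra x y) _; rewrite ge_max hx hy. Qed.

Lemma aD_lt x y B : absv x < B -> absv y < B -> absv (x + y) < B.
Proof. by move=> hx hy; apply: le_lt_trans (aultra x y) _; rewrite gt_max hx hy. Qed.

Lemma aB_le x y B : absv x <= B -> absv y <= B -> absv (x - y) <= B.
Proof. by move=> hx hy; apply: aD_le; rewrite ?aN. Qed.

Lemma aB_lt x y B : absv x < B -> absv y < B -> absv (x - y) < B.
Proof. by move=> hx hy; apply: aD_lt; rewrite ?aN. Qed.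

Lemma aD_strict x y : absv x < absv y -> absv (x + y) = absv y.
Proof.
move=> h; apply/eqP; rewrite eq_le; apply/andP; split.
  by apply: aD_le => //; exact: ltW.
have : absv y <= Num.max (absv (x + y)) (absv x).
  by have := aultra (x + y) (- x); rewrite aN addrC addKr.
rewrite le_max => /orP[//|h']; by move: (lt_le_trans h h'); rewrite ltxx.
Qed.

Lemma asum_le (I : Type) (s : seq I) (F : I -> K) B : 0 <= B ->
  (forall i, absv (F i) <= B) -> absv (\sum_(i <- s) F i) <= B.
Proof.
move=> B0 h; elim: s => [|i s IH]; first by rewrite big_nil a0.
by rewrite big_cons; apply: aD_le.
Qed.

Lemma asum_lt (I : Type) (s : seq I) (F : I -> K) B : 0 < B ->
  (forall i, absv (F i) < B) -> absv (\sum_(i <- s) F i) < B.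
Proof.
move=> B0 h; elim: s => [|i s IH]; first by rewrite big_nil a0.
by rewrite big_cons; apply: aD_lt.
Qed.

Lemma anat_le1 n : absv (n%:R) <= 1.
Proof.
elim: n => [|n IH]; first by rewrite a0 ler01.
by rewrite -addn1 natrD; apply: aD_le; rewrite ?a1.
Qed.

Lemma cvg_le (u : nat -> K) l b B N : cvgK absv u l ->
  (forall m, (N <= m)%N -> absv (u m - b) <= B) -> absv (l - b) <= B.
Proof.
move=> cu hu.
have B0 : 0 <= B by apply: le_trans (hu N (leqnn N)); exact: ag0.
apply/ler_addgt0Pr => e e0.
have [M HM] := cu e e0.
pose m := maxn M N.
have := aultra (l - u m) (u m - b).
rewrite addrA subrK => H; apply: (le_trans H); rewrite ge_max; apply/andP; split.
  rewrite aB; apply: ltW; apply: lt_le_trans (HM m (leq_maxl _ _)) _; lra.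
apply: le_trans (hu m (leq_maxr _ _)) _; lra.
Qed.

Lemma prod_coef (s : seq K) : (forall r, r \in s -> 1 < absv r) ->
  forall k, (0 < k)%N ->
  absv (\prod_(z <- s) ('X - z%:P))`_k < absv (\prod_(z <- s) ('X - z%:P))`_0.
Proof.
elim: s => [|z s IH] hs k k0.
  by rewrite big_nil !coefC (gtn_eqF k0) /= a0 a1.
set G := \prod_(z <- s) ('X - z%:P).
have IH' := IH (fun r rs => hs r (mem_behead (s:=z::s) rs)).
have hz : 1 < absv z by apply: hs; rewrite mem_head.
have G0 : 0 < absv G`_0 by apply: le_lt_trans (IH' 1%N isT); exact: ag0.
rewrite big_cons -/G mulrBl !coefB !coefXM !coefCM /= (gtn_eqF k0) sub0r aN amul.
have hzG : absv G`_0 < absv z * absv G`_0 by rewrite ltr_pMl.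
apply: aB_lt => //.
  case: k k0 => // k _ /=; case: k => [|k] //; apply: lt_trans hzG; exact: IH'.
by rewrite amul ltr_pM2l ?(lt_trans ltr01 hz) // IH'.
Qed.

Lemma newton (P : {poly K}) k : (0 < k)%N -> absv P`_0 <= absv P`_k -> P`_k != 0 ->
  exists t, absv t <= 1 /\ root P t.
Proof.
move=> k0 h nz; case: (pselect (exists t, absv t <= 1 /\ root P t)) => // Hn.
exfalso.
have P0 : P != 0 by apply/eqP => P0; move: nz; rewrite P0 coef0 eqxx.
have [s Hs] := closed_field_poly_normal P.
have lc0 : lead_coef P != 0 by rewrite lead_coef_eq0.
have hs : forall r, r \in s -> 1 < absv r.
  move=> r rs; rewrite ltNge; apply/negP => hr; apply: Hn; exists r; split => //.
  by rewrite Hs rootZ // root_prod_XsubC.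
have := @prod_coef s hs k k0; rewrite -(ltr_pM2l (apos _ lc0)) -!amul -!coefZ -Hs => H.
by move: (le_lt_trans h H); rewrite ltxx.
Qed.
Lemma asum_le_in (I : eqType) (s : seq I) (F : I -> K) B : 0 <= B ->
  (forall i, i \in s -> absv (F i) <= B) -> absv (\sum_(i <- s) F i) <= B.
Proof.
move=> B0; elim: s => [|i s IH] h; first by rewrite big_nil a0.
rewrite big_cons; apply: aD_le; first by apply: h; rewrite mem_head.
by apply: IH => j js; apply: h; rewrite in_cons js orbT.
Qed.

Lemma aXX u v k : absv u <= 1 -> absv v <= 1 -> absv (u ^+ k - v ^+ k) <= absv (u - v).
Proof.
move=> hu hv; rewrite subrXX amul -[X in _ <= X]mulr1 ler_wpM2l ?ag0 //.
apply: asum_le => // i; rewrite amul !aX.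
by rewrite mulr_ile1 ?exprn_ile1 ?exprn_ge0 ?ag0.
Qed.

Lemma bernoulli (d : R) n : 0 <= d -> 1 + n%:R * d <= (1 + d) ^+ n.
Proof.
move=> d0; elim: n => [|n IH]; first by rewrite mul0r addr0 expr0.
rewrite exprS -natr1.
have h1 : 0 <= (1 + d) ^+ n by rewrite exprn_ge0 // addr_ge0.
have h2 : 0 <= n%:R * d by rewrite mulr_ge0.
nra.
Qed.

Lemma geom_small (r c e : R) : 1 < r -> 0 < e -> 0 <= c ->
  exists N : nat, c * (r ^-1) ^+ N <= e.
Proof.
move=> r1 e0 c0.
pose d := r - 1.
have d0 : 0 < d by rewrite subr_gt0.
pose N := Num.Def.archi_bound (c / (e * d)).
exists N.
have hN : c / (e * d) < N%:R by apply: archi_boundP; rewrite divr_ge0 // mulr_ge0 // ltW.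
have hb := @bernoulli d N (ltW d0).
have rd : 1 + d = r by rewrite /d addrC subrK.
rewrite rd in hb.
have rN : 0 < r ^+ N by rewrite exprn_gt0 // (lt_trans ltr01 r1).
rewrite exprVn ler_pdivrMr //.
have : c < N%:R * (e * d) by rewrite -ltr_pdivrMr // mulr_gt0.
move=> H.
have : N%:R * (e * d) <= e * r ^+ N.
  have : N%:R * d <= r ^+ N by apply: le_trans hb; rewrite lerDr.
  move=> H2; rewrite mulrCA; apply: ler_wpM2l => //; exact: ltW.
lra.
Qed.

Lemma pexp_eq1 (x : R) n : (0 < n)%N -> 0 <= x -> x ^+ n = 1 -> x = 1.
Proof.
move=> n0 x0 h; apply/eqP; rewrite -(pexpr_eq1 n0 x0) h //.
Qed.

Lemma omega_ex (p : nat) : prime p -> absv p%:R = p%:R^-1 ->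
  exists w, absv w = 1 /\ absv (w - 1) = 1.
Proof.
move=> pp ap.
have p1 : (1 < p)%N by apply: prime_gt1.
have pR : (1 : R) < p%:R by rewrite ltr1n.
have aplt : absv p%:R < 1 by rewrite ap invf_lt1 // (lt_trans ltr01 pR).
case: (even_prime pp) => [p2 | po].
  have [x hx] := @solve_monicpoly K 2 (fun _ => -1) isT.
  rewrite !big_ord_recr big_ord0 /= add0r expr0 expr1 mulr1 !mulN1r in hx.
  have hx0 : x ^+ 2 + x + 1 = 0 by rewrite hx; ring.
  have x3 : x ^+ 3 = 1.
    apply/eqP; rewrite -subr_eq0; apply/eqP.
    have -> : x ^+ 3 - 1 = (x - 1) * (x ^+ 2 + x + 1) by ring.
    by rewrite hx0 mulr0.
  have ax : absv x = 1 by apply: (@pexp_eq1 _ 3) => //; rewrite ?ag0 // -aX x3 a1.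
  exists x; split => //.
  have e : (x - 1) ^+ 2 = - (3%:R * x).
    have -> : (x - 1) ^+ 2 = (x ^+ 2 + x + 1) - 3%:R * x by ring.
    by rewrite hx0 sub0r.
  have a2 : absv (2%:R : K) < 1 by rewrite -p2.
  have a3 : absv (3%:R : K) = 1.
    have -> : (3%:R : K) = 2%:R + 1 by rewrite -natr1.
    by rewrite aD_strict ?a1.
  by apply: (@pexp_eq1 _ 2) => //; rewrite ?ag0 // -aX e aN amul a3 ax mul1r.
exists (-1); split; first by rewrite aN1.
rewrite -opprD aN.
have a2 : absv (2%:R : K) = 1.
  apply/eqP; rewrite eq_le anat_le1 /= leNgt; apply/negP => h2.
  have hp : (p%:R : K) = 1 + 2%:R * (p./2)%:R.
    by rewrite -{1}(odd_double_half p) po natrD -mul2n natrM /= ?mulr1n.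
  have : absv (1 : K) < 1.
    have -> : (1 : K) = p%:R - 2%:R * (p./2)%:R by rewrite hp; ring.
    apply: aB_lt => //; rewrite amul; apply: le_lt_trans h2.
    by rewrite -[X in _ <= X]mulr1 ler_wpM2l ?ag0 ?anat_le1.
  by rewrite a1 ltxx.
by rewrite (_ : 1 + 1 = 2%:R) //.
Qed.
Variables (p : nat) (rhat c : R) (a : nat -> K) (Qf : K -> K) (lam h : K).
Hypothesis p1 : (1 < p)%N.
Hypothesis ap : absv p%:R = p%:R^-1.
Hypothesis rh1 : 1 < rhat.
Hypothesis hQ : is_series_fun absv rhat a Qf.
Hypothesis hc : forall i, absv (a i) * rhat ^+ i <= c.
Hypothesis c1 : c < 1.
Hypothesis hl : absv (lam - 1) < 1.
Hypothesis hh : absv (h - 1) < 1.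

Let f := Qlam p Qf lam h.

Lemma c0 : 0 <= c.
Proof. by apply: le_trans (hc 0); rewrite expr0 mulr1 ag0. Qed.

Lemma rh0 : 0 < rhat. Proof. exact: lt_trans ltr01 rh1. Qed.

Lemma pR1 : (1 : R) < p%:R. Proof. by rewrite ltr1n. Qed.
Lemma pR0 : (0 : R) < p%:R. Proof. exact: lt_trans ltr01 pR1. Qed.

Lemma ai_le i : absv (a i) <= c * (rhat ^-1) ^+ i.
Proof.
have ri : 0 < rhat ^+ i by rewrite exprn_gt0 // rh0.
by rewrite exprVn ler_pdivlMr.
Qed.

Lemma tail u N : absv u <= rhat ->
  absv (Qf u - ps_sum a u N) <= c * (absv u / rhat) ^+ N.
Proof.
move=> hu; apply: (@cvg_le _ _ _ _ N (hQ _ hu)) => m hm.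
rewrite /ps_sum -!(big_mkord xpredT (fun i => a i * u ^+ i)).
rewrite (big_cat_nat (leq0n N) hm) /= addrAC subrr add0r.
have q0 : 0 <= absv u / rhat by rewrite divr_ge0 ?ag0 // ltW // rh0.
have q1 : absv u / rhat <= 1 by rewrite ler_pdivrMr ?rh0 // mul1r.
apply: asum_le_in; first by rewrite mulr_ge0 ?c0 ?exprn_ge0.
move=> i; rewrite mem_index_iota => /andP[Ni _].
rewrite amul aX.
have -> : absv (a i) * absv u ^+ i = (absv (a i) * rhat ^+ i) * (absv u / rhat) ^+ i.
  have r0 : rhat != 0 by rewrite lt0r_neq0 // rh0.
  by rewrite exprMn exprVn; field; rewrite expf_neq0.
apply: ler_pM.
- by rewrite mulr_ge0 ?ag0 ?exprn_ge0 ?ltW ?rh0.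
- by rewrite exprn_ge0.
- exact: hc.
by rewrite -(subnK Ni) exprD ler_piMl ?exprn_ge0 ?exprn_ile1.
Qed.

Lemma Qbound u : absv u <= rhat -> absv (Qf u) <= c.
Proof.
move=> hu; have := tail u 0 hu; rewrite expr0 mulr1 /ps_sum big_ord0 subr0 //.
Qed.

Lemma pK0 : (p%:R : K) != 0.
Proof.
apply/eqP => h0; have := ap; rewrite h0 a0 => /esym/eqP.
by rewrite invr_eq0 (gt_eqF pR0).
Qed.

Lemma alam : absv lam = 1.
Proof.
have -> : lam = (lam - 1) + 1 by rewrite subrK.
by rewrite aD_strict a1.
Qed.

Lemma apinv : absv ((p%:R : K)^-1) = p%:R.
Proof.
have : absv (p%:R : K) * absv ((p%:R : K)^-1) = 1 by rewrite -amul divff ?pK0 ?a1.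
rewrite ap => H.
have hp0 : (p%:R : R) != 0 := lt0r_neq0 pR0.
have H' : p%:R^-1 * absv ((p%:R : K)^-1) = p%:R^-1 * p%:R by rewrite H mulVf.
by apply: (mulfI (invr_neq0 hp0)).
Qed.

Lemma alp : absv (lam / p%:R) = p%:R.
Proof. by rewrite amul alam apinv mul1r. Qed.

Lemma a1lp : absv (1 - lam / p%:R) = p%:R.
Proof. by rewrite aD_strict aN ?alp // a1 pR1. Qed.

Lemma Pl_fact u : Pl p lam u = u ^+ p * (u + lam / p%:R * (1 - u)).
Proof. rewrite /Pl exprS; ring. Qed.

Definition bad x := 1 <= absv x /\ 1 <= absv (x - 1).

Lemma step x : absv x <= rhat -> bad x -> p%:R * absv x <= absv (f x).
Proof.
move=> hx [bx bx1].
set u := x + h - 1.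
have ufx : f x = Pl p lam u + (Qf u + (1 - h)) by rewrite /f /Qlam -/u; ring.
have hu : u = (h - 1) + x by rewrite /u; ring.
have aQ : absv (Qf u + (1 - h)) < 1.
  apply: aD_lt; last by rewrite aB.
  apply: le_lt_trans c1; apply: Qbound.
  case: (ltrP 1 (absv x)) => [x1|x1].
    by rewrite hu aD_strict // (lt_trans hh x1).
  by rewrite hu; apply: aD_le; rewrite ?(le_trans _ (ltW rh1)) // ltW.
case: (ltrP 1 (absv x)) => [x1|x1].
  have au : absv u = absv x by rewrite hu aD_strict // (lt_trans hh x1).
  have aP : absv (Pl p lam u) = p%:R * absv x ^+ p.+1.
    have x0 : 0 < absv x by exact: lt_trans ltr01 x1.
    have A1 : absv (lam / p%:R * u ^+ p) = p%:R * absv x ^+ p by rewrite amul alp aX au.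
    have A2 : absv ((1 - lam / p%:R) * u ^+ p.+1) = p%:R * absv x ^+ p.+1.
      by rewrite amul a1lp aX au.
    rewrite /Pl aD_strict A2 // A1 ltr_pM2l ?pR0 // exprS ltr_pMl //.
    by rewrite exprn_gt0.
  have xe : 1 <= absv x ^+ p by rewrite exprn_ege1 // ltW.
  have big : 1 <= p%:R * absv x ^+ p.+1.
    rewrite exprS; apply: (le_trans (ltW pR1)); rewrite ler_peMr ?ltW ?pR0 //.
    nra.
  rewrite ufx addrC aD_strict aP; last by apply: lt_le_trans aQ _.
  by rewrite ler_pM2l ?pR0 // exprS ler_peMr ?ag0.
have ax : absv x = 1 by apply/eqP; rewrite eq_le x1 bx.
have au : absv u = 1 by rewrite hu aD_strict ?ax.
have au1 : absv (1 - u) = 1.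
  rewrite aB (_ : u - 1 = (h - 1) + (x - 1)); last by rewrite /u; ring.
  have ax1 : absv (x - 1) = 1 by apply/eqP; rewrite eq_le bx1 aB_le ?a1 ?ax.
  by rewrite aD_strict ax1.
have aP : absv (Pl p lam u) = p%:R.
  rewrite Pl_fact amul aX au expr1n mul1r aD_strict amul alp au1 ?mulr1 //.
  by rewrite au pR1.
rewrite ufx addrC aD_strict aP ?ax ?mulr1 //; apply: lt_trans aQ pR1.
Qed.

Lemma escape x : filledK absv f rhat x -> absv x < 1 \/ absv (x - 1) < 1.
Proof.
move=> hf; case: (pselect (absv x < 1 \/ absv (x - 1) < 1)) => // Hn; exfalso.
have bx : bad x by split; rewrite leNgt; apply/negP => H; apply: Hn; [left|right].
have key : forall n, 2%:R ^+ n <= absv (iter n f x) /\ bad (iter n f x).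
  elim => [|n [IH1 IH2]]; first by rewrite expr0; split => //; case: bx.
  have := step _ (hf n) IH2; rewrite /= => H.
  have fx1 : 2%:R ^+ n.+1 <= absv (f (iter n f x)).
    apply: le_trans H; rewrite exprS; apply: ler_pM => //; rewrite ?exprn_ge0 ?ler_nat //.
  have fg1 : 1 < absv (f (iter n f x)).
    by apply: lt_le_trans fx1; rewrite exprn_egt1 // ltr1n.
  split => //; split; first exact: ltW.
  by rewrite addrC aD_strict ?aN ?a1 // ltW.
pose n := Num.Def.archi_bound rhat.
have := @upper_nthrootP R rhat n (leqnn _).
have := le_trans (key n).1 (hf n).
move=> H1 H2; have := lt_le_trans H2 H1; by rewrite ltxx.
Qed.

Lemma filled_le1 x : filledK absv f rhat x -> absv x <= 1.
Proof.
move/escape => [/ltW//|H].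
have -> : x = (x - 1) + 1 by rewrite subrK.
by apply: aD_le; rewrite ?a1 // ltW.
Qed.

Lemma filled_iter x n : filledK absv f rhat x -> filledK absv f rhat (iter n f x).
Proof. by move=> hf m; rewrite -iterD; exact: hf. Qed.
Definition fN N z := Pl p lam (z + h - 1) + ps_sum a (z + h - 1) N + 1 - h.

Lemma u_le1 z : absv z <= 1 -> absv (z + h - 1) <= 1.
Proof. by move=> hz; rewrite -addrA; apply: aD_le => //; exact: ltW. Qed.

Lemma f_fN z N : absv z <= 1 -> absv (f z - fN N z) <= c * (rhat ^-1) ^+ N.
Proof.
move=> hz; have hu := u_le1 _ hz.
have -> : f z - fN N z = Qf (z + h - 1) - ps_sum a (z + h - 1) N.
  by rewrite /f /Qlam /fN; ring.
apply: le_trans (tail _ N (le_trans hu (ltW rh1))) _.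
apply: ler_wpM2l; first exact: c0.
have r0 := rh0.
apply: lerXn2r; rewrite ?nnegrE.
- by rewrite divr_ge0 ?ag0 // ltW.
- by rewrite invr_ge0 ltW.
by rewrite -[X in _ <= X]mul1r ler_wpM2r // invr_ge0 ltW.
Qed.

Lemma fN_lip N z w : absv z <= 1 -> absv w <= 1 ->
  absv (fN N z - fN N w) <= p%:R * absv (z - w).
Proof.
move=> hz hw; have hu := u_le1 _ hz; have hv := u_le1 _ hw.
set u := z + h - 1; set v := w + h - 1.
have uv : u - v = z - w by rewrite /u /v; ring.
have E : fN N z - fN N w = lam / p%:R * (u ^+ p - v ^+ p) +
    (1 - lam / p%:R) * (u ^+ p.+1 - v ^+ p.+1) + \sum_(i < N) a i * (u ^+ i - v ^+ i).
  have S : \sum_(i < N) a i * (u ^+ i - v ^+ i) =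
      \sum_(i < N) a i * u ^+ i - \sum_(i < N) a i * v ^+ i.
    by rewrite -sumrB; apply: eq_bigr => i _; rewrite mulrBr.
  rewrite S /fN /Pl /ps_sum -/u -/v; ring.
have B0 : 0 <= p%:R * absv (z - w) by rewrite mulr_ge0 ?ag0 ?ltW ?pR0.
rewrite E; apply: aD_le; first apply: aD_le.
- by rewrite amul alp -uv; apply: ler_wpM2l; [exact: ltW pR0 | exact: aXX].
- by rewrite amul a1lp -uv; apply: ler_wpM2l; [exact: ltW pR0 | exact: aXX].
apply: asum_le => // i; rewrite amul.
apply: (@le_trans _ _ (1 * absv (z - w))); last by rewrite ler_wpM2r ?ag0 ?ltW ?pR1.
apply: ler_pM; rewrite ?ag0 // -?uv ?aXX //.
apply: le_trans (ai_le i) _; apply: (le_trans _ (ltW c1)).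
have r0 := rh0.
have q0 : 0 <= rhat^-1 by rewrite invr_ge0 ltW.
have q1 : rhat^-1 <= 1 by rewrite invf_le1 // ltW.
by rewrite ler_piMr ?c0 // exprn_ile1.
Qed.

Lemma f_lip z w : absv z <= 1 -> absv w <= 1 ->
  absv (f z - f w) <= p%:R * absv (z - w).
Proof.
move=> hz hw; apply/ler_addgt0Pr => e e0.
have [N HN] := @geom_small rhat c e rh1 e0 c0.
have -> : f z - f w = (f z - fN N z) + (fN N z - fN N w) - (f w - fN N w) by ring.
have B0 : 0 <= p%:R * absv (z - w) by rewrite mulr_ge0 ?ag0 ?ltW ?pR0.
apply: aB_le; first apply: aD_le.
- by apply: le_trans (f_fN _ N hz) _; apply: le_trans HN _; rewrite lerDr.
- by apply: le_trans (fN_lip N _ _ hz hw) _; rewrite lerDl ltW.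
- by apply: le_trans (f_fN _ N hw) _; apply: le_trans HN _; rewrite lerDr.
Qed.

Lemma liter z w j : filledK absv f rhat z -> filledK absv f rhat w ->
  absv (iter j f z - iter j f w) <= p%:R ^+ j * absv (z - w).
Proof.
move=> hz hw; elim: j => [|j IH]; first by rewrite expr0 mul1r.
rewrite /= exprS -mulrA.
apply: le_trans (f_lip _ _ (filled_le1 _ (filled_iter _ j hz)) (filled_le1 _ (filled_iter _ j hw))) _.
by apply: ler_wpM2l; [exact: ltW pR0 | exact: IH].
Qed.

Definition polyF N (P : {poly K}) : {poly K} :=
  (lam / p%:R)%:P * (P + (h - 1)%:P) ^+ p + (1 - lam / p%:R)%:P * (P + (h - 1)%:P) ^+ p.+1
  + \sum_(i < N) (a i)%:P * (P + (h - 1)%:P) ^+ i + (1 - h)%:P.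

Lemma horner_polyF N P t : (polyF N P).[t] = fN N P.[t].
Proof.
rewrite /polyF /fN /Pl /ps_sum !hornerD !hornerM !hornerC !horner_exp hornerD hornerC.
rewrite horner_sum.
under eq_bigr do rewrite hornerM hornerC horner_exp hornerD hornerC.
by rewrite !addrA.
Qed.
Definition lineF (x y : K) := forall t, absv t <= 1 -> filledK absv f rhat (x + t * (y - x)).

Lemma approx x y n : lineF x y -> forall e, 0 < e -> e < 1 ->
  exists P : {poly K}, forall t, absv t <= 1 ->
    absv (P.[t] - iter n f (x + t * (y - x))) <= e.
Proof.
move=> hl0; elim: n => [|n IH] e e0 e1.
  exists (x%:P + 'X * (y - x)%:P) => t _.
  by rewrite !hornerE /= subrr a0 ltW.
have pp := pR0.
have e'0 : 0 < e / p%:R by rewrite divr_gt0.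
have e'1 : e / p%:R < 1.
  by rewrite ltr_pdivrMr // mul1r (lt_trans e1) // pR1.
have [P HP] := IH _ e'0 e'1.
have [N HN] := @geom_small rhat c e rh1 e0 c0.
exists (polyF N P) => t ht.
rewrite horner_polyF /=.
set w := iter n f _.
have fw : filledK absv f rhat w by apply: filled_iter; exact: hl0.
have hw := filled_le1 _ fw.
have hv : absv P.[t] <= 1.
  have -> : P.[t] = (P.[t] - w) + w by rewrite subrK.
  by apply: aD_le => //; apply: le_trans (HP t ht) _; exact: ltW.
have -> : fN N P.[t] - f w = (fN N P.[t] - fN N w) - (f w - fN N w) by ring.
apply: aB_le; last exact: le_trans (f_fN _ N hw) HN.
apply: le_trans (fN_lip N _ _ hv hw) _.
have -> : e = p%:R * (e / p%:R) by rewrite mulrC -mulrA mulVf ?mulr1 // lt0r_neq0.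
by apply: ler_wpM2l; [exact: ltW | exact: HP].
Qed.

Lemma sameB (om : K) : absv om = 1 -> absv (om - 1) = 1 ->
  forall x y n, lineF x y -> absv (iter n f x - iter n f y) < 1.
Proof.
move=> o1 o2 x y n hl0.
rewrite ltNge; apply/negP => H1.
have h2 : (0 : R) < 2^-1 by rewrite invr_gt0 ltr0n.
have h21 : (2^-1 : R) < 1 by rewrite invf_lt1 ?ltr1n ?ltr0n.
have [P HP] := approx x y n hl0 _ h2 h21.
have t0 : absv (0 : K) <= 1 by rewrite a0 ler01.
have t1 : absv (1 : K) <= 1 by rewrite a1.
have hx := HP 0 t0; rewrite mul0r addr0 in hx.
have hy := HP 1 t1.
have ey : x + 1 * (y - x) = y by rewrite mul1r addrC subrK.
rewrite ey in hy.
have fx : filledK absv f rhat x by have := hl0 0 t0; rewrite mul0r addr0.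
have fx1 := filled_le1 _ (filled_iter _ n fx).
have D1 : 1 <= absv (P.[1] - P.[0]).
  rewrite leNgt; apply/negP => H2; move: H1; rewrite leNgt => /negP; apply.
  have -> : iter n f x - iter n f y =
    - (P.[0] - iter n f x) + (P.[0] - P.[1]) + (P.[1] - iter n f y) by ring.
  apply: aD_lt; first apply: aD_lt.
  - by rewrite aN; apply: le_lt_trans hx h21.
  - by rewrite aB.
  - by apply: le_lt_trans hy h21.
pose Q := P - (P`_0)%:P.
have Q1 : Q.[1] = P.[1] - P.[0] by rewrite /Q hornerD hornerN hornerC horner_coef0.
have [k k0 Pk] : exists2 k, (0 < k)%N & 1 <= absv P`_k.
  case: (pselect (exists i : 'I_(size Q), 1 <= absv (Q`_i * 1 ^+ i))) => [[i Hi]|Hn].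
    exists i.
      rewrite lt0n; apply/negP => /eqP i0; move: Hi.
      by rewrite i0 expr0 mulr1 /Q coefB coefC /= subrr a0 leNgt ltr01.
    move: Hi; rewrite expr1n mulr1 /Q coefB coefC.
    case: eqP => [->|_]; last by rewrite subr0.
    by rewrite subrr a0 leNgt ltr01.
  exfalso; move: D1; rewrite -Q1 horner_coef leNgt => /negP; apply.
  apply: asum_lt => [|i]; first exact: ltr01.
  by rewrite ltNge; apply/negP => Hi; apply: Hn; exists i.
have P0 : absv P`_0 <= 1.
  rewrite -horner_coef0 -(subrK (iter n f x) P.[0]); apply: aD_le => //.
  by apply: le_trans hx (ltW h21).
have fin : forall w, absv (P`_0 - w) <= absv P`_k ->
    (forall v, absv (v - w) <= 2^-1 -> absv v < 1 \/ absv (v - 1) < 1 -> False) -> False.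
  move=> w hw hbad.
  have nz : P`_k != 0 by apply/eqP => Pk0; move: Pk; rewrite Pk0 a0 leNgt ltr01.
  have k0' : k != 0%N by rewrite -lt0n.
  have cA : absv (P - w%:P)`_0 <= absv (P - w%:P)`_k.
    by rewrite !coefB !coefC eqxx (negbTE k0') subr0.
  have cB : (P - w%:P)`_k != 0 by rewrite coefB coefC (negbTE k0') subr0.
  have [t [ht rt]] := @newton (P - w%:P) k k0 cA cB.
  apply: (hbad (iter n f (x + t * (y - x)))).
    have := HP t ht; rewrite aB.
    have -> : P.[t] = w by move: rt; rewrite /root hornerD hornerN hornerC subr_eq0 => /eqP.
    by [].
  by apply: escape; apply: filled_iter; exact: (hl0 t ht).
case: (ltrP 1 (absv P`_k)) => [Pk1|Pk1].
  apply: (fin (P`_0 + P`_k)); first by rewrite opprD addNKr aN.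
  move=> v hv.
  have aw : absv (P`_0 + P`_k) = absv P`_k by rewrite aD_strict // (le_lt_trans P0 Pk1).
  have av : absv v = absv P`_k.
    rewrite -(subrK (P`_0 + P`_k) v) aD_strict aw //.
    by apply: le_lt_trans hv (lt_trans h21 Pk1).
  have av1 : absv (v - 1) = absv P`_k by rewrite addrC aD_strict ?aN ?a1 ?av.
  by rewrite av av1 => -[] H; have := lt_trans H Pk1; rewrite ltxx.
apply: (fin om).
  by rewrite (le_trans _ Pk) // aB_le ?o1.
move=> v hv.
have av : absv v = 1 by rewrite -(subrK om v) aD_strict o1 // (le_lt_trans hv h21).
have av1 : absv (v - 1) = 1.
  have -> : v - 1 = (v - om) + (om - 1) by ring.
  by rewrite aD_strict o2 // (le_lt_trans hv h21).
by rewrite av av1 ltxx => -[].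
Qed.
Lemma th_det th z n : itinerary_of absv f z th -> th n = (absv (iter n f z - 1) < 1).
Proof.
move=> H; have := H n; case: (th n) => // H'.
by rewrite aD_strict ?aN1 ?ltxx // aN1.
Qed.

Lemma near_eq A B : absv (A - B) < 1 -> (absv (A - 1) < 1) = (absv (B - 1) < 1).
Proof.
move=> hAB; apply/idP/idP => H.
  have -> : B - 1 = - (A - B) + (A - 1) by ring.
  by apply: aD_lt; rewrite ?aN.
have -> : A - 1 = (A - B) + (B - 1) by ring.
exact: aD_lt.
Qed.

Lemma part1 (om : K) : absv om = 1 -> absv (om - 1) = 1 ->
  forall D, cp_ball absv D -> D `<=` filledK absv f rhat ->
  exists th, forall z, D z -> itinerary_of absv f z th.
Proof.
move=> o1 o2 D [cc [r [r0 HD]]] hD.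
have Dc : D cc by case: HD => ->; rewrite /= subrr a0 // ltW.
have Dl : forall z, D z -> lineF cc z.
  move=> z Dz t ht; apply: hD.
  have E : absv (cc + t * (z - cc) - cc) <= absv (z - cc).
    rewrite addrAC subrr add0r amul -[X in _ <= X]mul1r ler_wpM2r ?ag0 //.
  by case: HD Dz => -> /= Dz; [exact: le_lt_trans E Dz | exact: le_trans E Dz].
exists (fun n => absv (iter n f cc - 1) < 1) => z Dz n.
have hB := sameB om o1 o2 cc z n (Dl z Dz).
have hB' : absv (iter n f z - iter n f cc) < 1 by rewrite aB.
case: ifP => Hc; first by rewrite (near_eq _ _ hB') Hc.
have := escape _ (filled_iter _ n (hD cc Dc)); rewrite Hc => -[] // H0.
have -> : iter n f z = (iter n f z - iter n f cc) + iter n f cc by rewrite subrK.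
exact: aD_lt.
Qed.
Lemma part_wand D th : (forall z, D z -> itinerary_of absv f z th) ->
  ~ preperiodic th -> wandering f D.
Proof.
move=> Hit np n m [w [[z1 Dz1 e1] [z2 Dz2 e2]]].
have E : forall j, th (j + n)%N = th (j + m)%N.
  move=> j; rewrite (th_det _ _ (j + n) (Hit z1 Dz1)) (th_det _ _ (j + m) (Hit z2 Dz2)).
  by rewrite !iterD e1 e2.
case: (ltngtP n m) => // H; exfalso; apply: np.
  exists n, (m - n)%N; split; first by rewrite subn_gt0.
  move=> i hi; have := E (i - n)%N; rewrite subnK //.
  by rewrite (_ : (i - n + m = i + (m - n))%N) //; lia.
exists m, (n - m)%N; split; first by rewrite subn_gt0.
move=> i hi; have := E (i - m)%N; rewrite [in X in _ = X]subnK //.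
by rewrite (_ : (i - m + n = i + (n - m))%N) //; lia.
Qed.

Lemma part_att D th : (forall z, D z -> itinerary_of absv f z th) ->
  ~ preperiodic th -> not_attracted absv f rhat D.
Proof.
move=> Hit np [z0 [k [[k0 fz0 _ _] [z [cc [r [Dz r0 hz Hb]]]]]]].
have [fz cz] := Hb z hz.
apply: np.
have pk0 : (0 : R) < p%:R ^+ k by rewrite exprn_gt0 // pR0.
have pk1 : (0 : R) < (p%:R ^+ k)^-1 by rewrite invr_gt0.
have [N HN] := cz _ pk1.
have claim : forall q j, (N <= q)%N -> (j < k)%N ->
    th (q * k + j)%N = (absv (iter j f z0 - 1) < 1).
  move=> q j hq hj.
  rewrite (th_det _ _ (q * k + j) (Hit z Dz)) addnC iterD.
  apply: near_eq.
  have hv := HN q hq.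
  apply: le_lt_trans (liter _ _ j (filled_iter _ _ fz) fz0) _.
  have pj : p%:R ^+ j <= p%:R ^+ k :> R.
    by rewrite ler_eXn2l ?pR1 // ltnW.
  have : p%:R ^+ j * absv (iter (q * k) f z - z0) < p%:R ^+ k * (p%:R ^+ k)^-1.
    apply: le_lt_trans (ler_wpM2r (ag0 _) pj) _.
    by rewrite ltr_pM2l.
  by rewrite mulfV ?lt0r_neq0.
exists (N * k)%N, k; split => // n hn.
have hq : (N <= n %/ k)%N by rewrite leq_divRL.
have hj : (n %% k < k)%N by rewrite ltn_mod.
rewrite {1 2}(divn_eq n k).
rewrite (_ : (n %/ k * k + n %% k + k = (n %/ k).+1 * k + n %% k)%N); last by rewrite mulSn; lia.
by rewrite !claim // ltnW.
Qed.
Lemma main (om : K) : absv om = 1 -> absv (om - 1) = 1 ->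
  forall D, cp_ball absv D -> D `<=` filledK absv f rhat ->
  (exists th : nat -> bool, forall z, D z -> itinerary_of absv f z th) /\
  (forall th : nat -> bool,
     (forall z, D z -> itinerary_of absv f z th) ->
     ~ preperiodic th ->
     wandering f D /\ not_attracted absv f rhat D).
Proof.
move=> o1 o2 D hb hD; split; first exact: (part1 om o1 o2 D hb hD).
move=> th Hit np; split; [exact: (part_wand D th Hit np) | exact: (part_att D th Hit np)].
Qed.
End Val.

Lemma rho_le1 (R : realType) (p : nat) : (1 <= p)%N -> rho R p <= 1.
Proof.
move=> p1; rewrite /rho.
have H1 : (1 : R) <= p%:R by rewrite ler1n.
have H2 : - (p%:R - 1)^-1 <= (0 : R) by rewrite oppr_le0 invr_ge0 subr_ge0.
by apply: le_trans (ler_powR H1 H2) _; rewrite powRr0.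
Qed.

Theorem lemma3p8 (R : realType) (K : closedFieldType) (absv : K -> R) (p : nat)
  (rhat : R) (a : nat -> K) (Qf : K -> K) (lam h : K) (D : set K) :
  is_Cp absv p ->
  (exists x : K, x != 0 /\ absv x = rhat) -> 1 < rhat ->
  is_series_fun absv rhat a Qf ->
  (exists c : R, c < rho R p /\ forall i, absv (a i) * rhat ^+ i <= c) ->
  absv (lam - 1) < 1 ->
  Pl p lam h + Qf h = h ->
  absv (h - 1) <= absv (Qf 1) / p%:R ->
  cp_ball absv D ->
  D `<=` filledK absv (Qlam p Qf lam h) rhat ->
  (exists th : nat -> bool, forall z, D z -> itinerary_of absv (Qlam p Qf lam h) z th) /\
  (forall th : nat -> bool,
     (forall z, D z -> itinerary_of absv (Qlam p Qf lam h) z th) ->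
     ~ preperiodic th ->
     wandering (Qlam p Qf lam h) D /\ not_attracted absv (Qlam p Qf lam h) rhat D).
Proof.
move=> [[pp a0 apos amul aultra] [ap _ _]] _ rh1 hQ [c [crho hc]] hl _ hh0 hball hD.
have p1 : (1 < p)%N by apply: prime_gt1.
have c1 : c < 1 by apply: lt_le_trans crho (rho_le1 R p (ltnW p1)).
have pR : (1 : R) <= p%:R by rewrite ler1n ltnW.
have hh : absv (h - 1) < 1.
  apply: le_lt_trans hh0 _.
  have q1 : absv (Qf 1) <= c.
    apply: (@Qbound R K absv a0 apos amul aultra rhat c a Qf rh1 hQ hc).
    by rewrite (@a1 R K absv apos amul) ltW.
  have q0 : 0 <= absv (Qf 1) := @ag0 R K absv a0 apos (Qf 1).
  rewrite ltr_pdivrMr ?(lt_le_trans ltr01 pR) // mul1r.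
  exact: le_lt_trans q1 (lt_le_trans c1 pR).
have [w0 [w1 w2]] := @omega_ex R K absv a0 apos amul aultra p pp ap.
exact: (@main R K absv a0 apos amul aultra p rhat c a Qf lam h p1 ap rh1 hQ hc c1 hl hh w0 w1 w2 D hball hD).
Qed.
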